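(* Let $A\subseteq\omega$ be a c.e. set which has a density and let $\epsilon$ be a positive real number. Then $A$ has a computable subset $B$ such that $D(A,B)<\epsilon$.
   Context: For $S\subseteq\omega$ and $n>0$, $\rho_n(S)=|S\cap[0,n)|/n$; the upper density is $\overline{\rho}(S)=\limsup_n\rho_n(S)$ and the density is $\rho(S)=\lim_n\rho_n(S)$ when the limit exists. For $A,B\subseteq\omega$, $D(A,B)=\overline{\rho}(A\triangle B)$, the upper density of the symmetric difference. *)

(* Defs.v *)
From Stdlib Require Import Reals List Arith.
From Coquelicot Require Import Coquelicot.
Import ListNotations.

Inductive mu_code : Type :=
| mZero : mu_code
| mSucc : mu_code
| mProj : nat -> mu_code                       (* i-th argument (0-based) *)
| mComp : mu_code -> list mu_code -> mu_code
| mPrec : mu_code -> mu_code -> mu_code        (* primitive recursion on 1st arg *)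
| mMin  : mu_code -> mu_code.                  (* unbounded minimisation on 1st arg *)

Inductive mu_eval : mu_code -> list nat -> nat -> Prop :=
| ev_zero xs : mu_eval mZero xs 0%nat
| ev_succ x xs : mu_eval mSucc (x :: xs) (S x)
| ev_proj (i : nat) xs : (i < length xs)%nat -> mu_eval (mProj i) xs (nth i xs 0%nat)
| ev_comp f gs xs ys y :
    mu_evals gs xs ys -> mu_eval f ys y -> mu_eval (mComp f gs) xs y
| ev_prec0 f g xs y : mu_eval f xs y -> mu_eval (mPrec f g) (0%nat :: xs) y
| ev_precS f g n xs y z :
    mu_eval (mPrec f g) (n :: xs) y -> mu_eval g (n :: y :: xs) z ->
    mu_eval (mPrec f g) (S n :: xs) z
| ev_min f xs n :
    mu_eval f (n :: xs) 0%nat ->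
    (forall m, (m < n)%nat -> exists k, mu_eval f (m :: xs) (S k)) ->
    mu_eval (mMin f) xs n
with mu_evals : list mu_code -> list nat -> list nat -> Prop :=
| evs_nil xs : mu_evals [] xs []
| evs_cons g gs xs y ys :
    mu_eval g xs y -> mu_evals gs xs ys -> mu_evals (g :: gs) xs (y :: ys).

Definition char01 (S : nat -> bool) (n : nat) : nat := if S n then 1%nat else 0%nat.

Definition computable_set (S : nat -> bool) : Prop :=
  exists c : mu_code, forall n, mu_eval c [n] (char01 S n).

Definition ce_set (S : nat -> bool) : Prop :=
  exists c : mu_code, forall n, S n = true <-> exists y, mu_eval c [n] y.

Fixpoint count_below (S : nat -> bool) (n : nat) : nat :=
  match n with
  | 0%nat => 0%nat
  | Datatypes.S m => (count_below S m + char01 S m)%nat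
  end.

Definition rho_n (S : nat -> bool) (n : nat) : R :=
  INR (count_below S n) / INR n.

Definition rho_seq (S : nat -> bool) : nat -> R := fun k => rho_n S (Datatypes.S k).

(* upper density, an extended real (always finite, in [0,1]) *)
Definition upper_density (S : nat -> bool) : Rbar := LimSup_seq (rho_seq S).

Definition has_density (S : nat -> bool) : Prop :=
  exists l : R, is_lim_seq (rho_seq S) (Finite l).

Definition symdiff (A B : nat -> bool) : nat -> bool := fun n => xorb (A n) (B n).

Definition Dist (A B : nat -> bool) : Rbar := upper_density (symdiff A B).

Definition subset_of (B A : nat -> bool) : Prop := forall n, B n = true -> A n = true.

(* Main.v *)
Require Import Defs.
From Stdlib Require Import Reals.
From Coquelicot Require Import Coquelicot.
From Stdlib Require Import List Arith Lia ConstructiveEpsilon Lra ZArith.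
Import ListNotations.
Open Scope nat_scope.

Fixpoint mu_code_ind' (P : mu_code -> Prop)
  (H0 : P mZero) (H1 : P mSucc) (H2 : forall i, P (mProj i))
  (H3 : forall f gs, P f -> Forall P gs -> P (mComp f gs))
  (H4 : forall f g, P f -> P g -> P (mPrec f g))
  (H5 : forall f, P f -> P (mMin f)) (c : mu_code) {struct c} : P c :=
  match c with
  | mZero => H0 | mSucc => H1 | mProj i => H2 i
  | mComp f gs => H3 f gs (mu_code_ind' P H0 H1 H2 H3 H4 H5 f)
      ((fix L (l : list mu_code) : Forall P l :=
         match l with [] => Forall_nil P
         | g :: l' => Forall_cons g (mu_code_ind' P H0 H1 H2 H3 H4 H5 g) (L l') end) gs)
  | mPrec f g => H4 f g (mu_code_ind' P H0 H1 H2 H3 H4 H5 f) (mu_code_ind' P H0 H1 H2 H3 H4 H5 g)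
  | mMin f => H5 f (mu_code_ind' P H0 H1 H2 H3 H4 H5 f)
  end.

Definition sg (x : nat) := match x with 0 => 0 | _ => 1 end.
Definition iz (x : nat) := match x with 0 => 1 | _ => 0 end.
Definition hh (t w : nat) := iz w + iz (pred w) * (sg w * S (S t)).
Definition prodl (l : list nat) := fold_right Nat.mul 1 l.

Fixpoint ploop (F G : list nat -> nat) (xs : list nat) (n : nat) : nat :=
  match n with 0 => F xs
  | S m => let v := ploop F G xs m in sg v * G (m :: pred v :: xs) end.

Fixpoint srch (F : list nat -> nat) (xs : list nat) (t : nat) : nat :=
  match t with 0 => 0
  | S t' => let a := srch F xs t' in a + iz a * hh t' (F (t' :: xs)) end.

Fixpoint ev (s : nat) (c : mu_code) (xs : list nat) {struct c} : nat :=
  match c with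
  | mZero => 1
  | mSucc => match xs with x :: _ => S (S x) | [] => 0 end
  | mProj i => if i <? length xs then S (nth i xs 0) else 0
  | mComp f gs => let ys := map (fun g => ev s g xs) gs in
       ev s f (map pred ys) * sg (prodl ys)
  | mPrec f g => match xs with [] => 0 | n :: xs' => ploop (ev s f) (ev s g) xs' n end
  | mMin f => pred (srch (ev s f) xs s)
  end.

Lemma prodl_nz : forall l, prodl l <> 0 -> Forall (fun y => y <> 0) l.
Proof.
  induction l; simpl; intros H; constructor.
  - intro; subst; simpl in H; lia.
  - apply IHl; intro E; rewrite E in H; lia.
Qed.

Lemma sg_mul_S : forall x p y, x * sg p = S y -> x = S y /\ p <> 0.
Proof. intros x p y; destruct p; simpl; intros; split; lia. Qed.

Lemma ploop_sound : forall F G xs (f g : mu_code),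
  (forall xs y, F xs = S y -> mu_eval f xs y) ->
  (forall xs y, G xs = S y -> mu_eval g xs y) ->
  forall n y, ploop F G xs n = S y -> mu_eval (mPrec f g) (n :: xs) y.
Proof.
  intros F G xs f g HF HG n. induction n; simpl; intros y H.
  - constructor. apply HF; auto.
  - destruct (ploop F G xs n) as [|v] eqn:E; simpl in H; [discriminate|].
    rewrite Nat.add_0_r in H.
    eapply ev_precS. apply IHn; eauto. apply HG. exact H.
Qed.

Lemma hh_cases : forall t w, (w = 0 /\ hh t w = 1) \/ (w = 1 /\ hh t w = S (S t)) \/ (2 <= w /\ hh t w = 0).
Proof. intros t [|[|w]]; unfold hh; simpl; lia. Qed.

Lemma srch_zero : forall F xs t, srch F xs t = 0 -> forall m, m < t -> 2 <= F (m :: xs).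
Proof.
  intros F xs t; induction t; simpl; intros H m Hm; [lia|].
  destruct (srch F xs t) eqn:E; simpl in H.
  - destruct (hh_cases t (F (t :: xs))) as [[Ha Hb]|[[Ha Hb]|[Ha Hb]]]; try lia.
    assert (m < t \/ m = t) as [|] by lia; [apply IHt; auto| subst; auto].
  - lia.
Qed.

Lemma srch_found : forall F xs t n, srch F xs t = S (S n) ->
  n < t /\ F (n :: xs) = 1 /\ forall m, m < n -> 2 <= F (m :: xs).
Proof.
  intros F xs t; induction t; simpl; intros n H; [lia|].
  destruct (srch F xs t) eqn:E; simpl in H.
  - destruct (hh_cases t (F (t :: xs))) as [[Ha Hb]|[[Ha Hb]|[Ha Hb]]]; try lia.
    assert (n = t) by lia; subst. repeat split; auto. apply srch_zero; auto.
  - destruct (IHt n) as [? [? ?]]; [lia|]. repeat split; auto.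
Qed.

Lemma ev_sound : forall c s xs y, ev s c xs = S y -> mu_eval c xs y.
Proof.
  induction c using mu_code_ind'; intros s xs y Hev; simpl in Hev.
  - injection Hev; intros; subst; constructor.
  - destruct xs; [discriminate|]. injection Hev; intros; subst; constructor.
  - destruct (i <? length xs) eqn:E; [|discriminate].
    injection Hev; intros; subst. constructor. apply Nat.ltb_lt; auto.
  - apply sg_mul_S in Hev. destruct Hev as [H1 H2].
    apply prodl_nz in H2.
    econstructor; [|apply (IHc s); exact H1].
    clear H1 IHc. induction gs as [|g gs IH]; simpl; [constructor|].
    inversion H; subst. inversion H2; subst.
    constructor.
    + destruct (ev s g xs) eqn:E; [congruence|]. simpl. eapply H3. exact E.
    + apply IH; auto.
  - destruct xs as [|n xs]; [discriminate|].
    eapply ploop_sound; eauto.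
  - destruct (srch (ev s c) xs s) as [|[|n]] eqn:E; simpl in Hev; try discriminate.
    injection Hev; intros; subst.
    apply srch_found in E. destruct E as [_ [E1 E2]].
    constructor.
    + apply (IHc s). auto.
    + intros m Hm. specialize (E2 m Hm).
      destruct (ev s c (m :: xs)) as [|[|k]] eqn:E3; try lia.
      exists k. apply (IHc s). auto.
Qed.

Lemma srch_zero_upto : forall F xs n, (forall m, m < n -> 2 <= F (m :: xs)) ->
  forall t, t <= n -> srch F xs t = 0.
Proof.
  intros F xs n Hm t; induction t; simpl; intros Ht; auto.
  rewrite IHt by lia. simpl.
  destruct (hh_cases t (F (t :: xs))) as [[Ha Hb]|[[Ha Hb]|[Ha Hb]]]; try lia.
  specialize (Hm t); lia. specialize (Hm t); lia.
Qed.

Lemma srch_hit : forall F xs n, (forall m, m < n -> 2 <= F (m :: xs)) -> F (n :: xs) = 1 ->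
  forall t, n < t -> srch F xs t = S (S n).
Proof.
  intros F xs n Hm Hn t; induction t; intros Ht; [lia|].
  simpl. assert (t = n \/ n < t) as [E|E] by lia.
  - subst. rewrite (srch_zero_upto F xs n Hm n) by lia. rewrite Hn. unfold hh; simpl; lia.
  - rewrite IHt by auto. simpl. lia.
Qed.

Lemma bound_all : forall (R : nat -> nat -> Prop) n,
  (forall m, m < n -> exists s0, forall s, s0 <= s -> R m s) ->
  exists S0, forall m, m < n -> forall s, S0 <= s -> R m s.
Proof.
  intros R n; induction n; intros H.
  - exists 0; intros; lia.
  - destruct IHn as [S1 H1]. intros m Hm; apply H; lia.
    destruct (H n) as [S2 H2]; [lia|].
    exists (S1 + S2). intros m Hm s Hs.
    assert (m < n \/ m = n) as [|] by lia; [apply H1; lia| subst; apply H2; lia].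
Qed.

Lemma map_pred_S : forall l, map pred (map S l) = l.
Proof. induction l; simpl; f_equal; auto. Qed.

Lemma prodl_S : forall l, prodl (map S l) <> 0.
Proof. induction l; simpl; [lia|]. lia. Qed.

Fixpoint ev_complete c xs y (d : mu_eval c xs y) {struct d} :
  exists s0, forall s, s0 <= s -> ev s c xs = S y
with evs_complete gs xs ys (d : mu_evals gs xs ys) {struct d} :
  exists s0, forall s, s0 <= s -> map (fun g => ev s g xs) gs = map S ys.
Proof.
  - destruct d as [xs0|x xs0|i xs0 Hi|f gs xs0 ys y0 m d|f g xs0 y0 d|f g n xs0 y0 z d1 d2|f xs0 n d e].
    + exists 0; intros; reflexivity.
    + exists 0; intros; reflexivity.
    + exists 0; intros; simpl. match goal with H : _ < length _ |- _ => apply Nat.ltb_lt in H; rewrite H end. reflexivity.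
    + destruct (evs_complete _ _ _ m) as [s1 H1].
      destruct (ev_complete _ _ _ d) as [s2 H2].
      exists (s1 + s2). intros s Hs. simpl. rewrite H1 by lia.
      rewrite map_pred_S. rewrite H2 by lia.
      destruct (prodl (map S ys)) eqn:E; [exfalso; eapply prodl_S; eauto|]. simpl. lia.
    + destruct (ev_complete _ _ _ d) as [s1 H1].
      exists s1. intros s Hs. simpl. apply H1; auto.
    + destruct (ev_complete _ _ _ d1) as [s1 H1].
      destruct (ev_complete _ _ _ d2) as [s2 H2].
      exists (s1 + s2). intros s Hs. specialize (H1 s ltac:(lia)). simpl in H1 |- *.
      rewrite H1. simpl. rewrite H2 by lia. lia.
    + destruct (ev_complete _ _ _ d) as [s1 H1].
      assert (Hb : exists S0, forall m, m < n -> forall s, S0 <= s -> 2 <= ev s f (m :: xs0)).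
      { apply bound_all. intros m Hm. destruct (e m Hm) as [k dk].
        destruct (ev_complete _ _ _ dk) as [s2 H2]. exists s2. intros s Hs.
        rewrite H2 by auto. lia. }
      destruct Hb as [S0 HS0].
      exists (s1 + S0 + S n). intros s Hs. simpl.
      rewrite (srch_hit (ev s f) xs0 n).
      * reflexivity.
      * intros m Hm. apply HS0; lia.
      * apply H1; lia.
      * lia.
  - destruct d as [xs0|g gs xs0 y0 ys0 m d].
    + exists 0; intros; reflexivity.
    + destruct (ev_complete _ _ _ m) as [s1 H1].
      destruct (evs_complete _ _ _ d) as [s2 H2].
      exists (s1 + s2). intros s Hs. simpl. rewrite H1 by lia. rewrite H2 by lia. reflexivity.
Qed.

Fixpoint cconst (k : nat) : mu_code := match k with 0 => mZero | S k => mComp mSucc [cconst k] end.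
Definition cpred := mPrec mZero (mProj 0).
Definition cadd := mPrec (mProj 0) (mComp mSucc [mProj 1]).
Definition cmul := mPrec mZero (mComp cadd [mProj 1; mProj 2]).
Definition csg := mPrec mZero (cconst 1).
Definition ciz := mPrec (cconst 1) mZero.
Definition csub := mPrec (mProj 0) (mComp cpred [mProj 1]).

Lemma ev_eq : forall c xs a b, mu_eval c xs a -> a = b -> mu_eval c xs b.
Proof. intros; subst; auto. Qed.

Lemma E_proj : forall i xs, i < length xs -> mu_eval (mProj i) xs (nth i xs 0).
Proof. intros; constructor; auto. Qed.

Lemma E_c1 : forall F K xs a b, mu_eval K xs a -> mu_eval F [a] b -> mu_eval (mComp F [K]) xs b.
Proof. intros. econstructor; [|eauto]. repeat econstructor; eauto. Qed.
Lemma E_c2 : forall F K1 K2 xs a1 a2 b, mu_eval K1 xs a1 -> mu_eval K2 xs a2 ->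
  mu_eval F [a1; a2] b -> mu_eval (mComp F [K1; K2]) xs b.
Proof. intros. econstructor; [|eauto]. repeat econstructor; eauto. Qed.

Lemma cconst_ok : forall k xs, mu_eval (cconst k) xs k.
Proof. induction k; simpl; intros; [constructor|]. eapply E_c1; eauto. constructor. Qed.

Lemma cpred_ok : forall x xs, mu_eval cpred (x :: xs) (pred x).
Proof. induction x; intros; [repeat constructor|]. eapply ev_precS; eauto.
  apply (E_proj 0 (x :: pred x :: xs)); simpl; lia. Qed.

Lemma cadd_ok : forall x y xs, mu_eval cadd (x :: y :: xs) (x + y).
Proof. induction x; intros.
  - constructor. apply (E_proj 0 (y :: xs)); simpl; lia.
  - eapply ev_precS; eauto. eapply E_c1. apply (E_proj 1 (x :: (x + y) :: y :: xs)); simpl; lia.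
    simpl. constructor. Qed.

Lemma cmul_ok : forall x y xs, mu_eval cmul (x :: y :: xs) (x * y).
Proof. induction x; intros.
  - repeat constructor.
  - eapply ev_precS; eauto. eapply E_c2.
    apply (E_proj 1 (x :: (x * y) :: y :: xs)); simpl; lia.
    apply (E_proj 2 (x :: (x * y) :: y :: xs)); simpl; lia.
    simpl. eapply ev_eq. apply cadd_ok. lia. Qed.

Lemma csg_ok : forall x xs, mu_eval csg (x :: xs) (sg x).
Proof. induction x; intros xs; [repeat constructor|]. eapply ev_precS. apply IHx.
  apply cconst_ok. Qed.

Lemma ciz_ok : forall x xs, mu_eval ciz (x :: xs) (iz x).
Proof. induction x; intros xs; [constructor; apply cconst_ok|]. eapply ev_precS. apply IHx.
  constructor. Qed.

Lemma csub_ok : forall v u xs, mu_eval csub (v :: u :: xs) (u - v).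
Proof. induction v; intros.
  - constructor. eapply ev_eq. apply (E_proj 0 (u :: xs)); simpl; lia. simpl; lia.
  - eapply ev_precS; eauto. eapply E_c1. apply (E_proj 1 (v :: (u - v) :: u :: xs)); simpl; lia.
    simpl. eapply ev_eq. apply cpred_ok. lia. Qed.

Lemma E_pred : forall K xs a, mu_eval K xs a -> mu_eval (mComp cpred [K]) xs (pred a).
Proof. intros; eapply E_c1; eauto; apply cpred_ok. Qed.
Lemma E_sg : forall K xs a, mu_eval K xs a -> mu_eval (mComp csg [K]) xs (sg a).
Proof. intros; eapply E_c1; eauto; apply csg_ok. Qed.
Lemma E_iz : forall K xs a, mu_eval K xs a -> mu_eval (mComp ciz [K]) xs (iz a).
Proof. intros; eapply E_c1; eauto; apply ciz_ok. Qed.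
Lemma E_succ : forall K xs a, mu_eval K xs a -> mu_eval (mComp mSucc [K]) xs (S a).
Proof. intros; eapply E_c1; eauto; constructor. Qed.
Lemma E_add : forall K1 K2 xs a b, mu_eval K1 xs a -> mu_eval K2 xs b -> mu_eval (mComp cadd [K1; K2]) xs (a + b).
Proof. intros; eapply E_c2; eauto; apply cadd_ok. Qed.
Lemma E_mul : forall K1 K2 xs a b, mu_eval K1 xs a -> mu_eval K2 xs b -> mu_eval (mComp cmul [K1; K2]) xs (a * b).
Proof. intros; eapply E_c2; eauto; apply cmul_ok. Qed.
Lemma E_sub : forall K1 K2 xs a b, mu_eval K1 xs a -> mu_eval K2 xs b -> mu_eval (mComp csub [K1; K2]) xs (b - a).
Proof. intros; eapply E_c2; eauto; apply csub_ok. Qed.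

Lemma E_projs : forall xs pre, mu_evals (map mProj (seq (length pre) (length xs))) (pre ++ xs) xs.
Proof.
  induction xs; intros pre; simpl; [constructor|].
  constructor.
  - eapply ev_eq. apply E_proj. rewrite length_app; simpl; lia.
    rewrite app_nth2 by lia. rewrite Nat.sub_diag. reflexivity.
  - specialize (IHxs (pre ++ [a])). rewrite length_app in IHxs. simpl in IHxs.
    rewrite Nat.add_1_r in IHxs. rewrite <- app_assoc in IHxs. exact IHxs.
Qed.

Fixpoint prodc (Ks : list mu_code) : mu_code :=
  match Ks with [] => cconst 1 | K :: Ks => mComp cmul [K; prodc Ks] end.

Definition STEP (Kf : mu_code) (n : nat) : mu_code :=
  let W := mComp Kf (mProj 2 :: mProj 0 :: map mProj (seq 3 n)) in
  mComp cadd [mProj 1; mComp cmul [mComp ciz [mProj 1];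
    mComp cadd [mComp ciz [W]; mComp cmul [mComp ciz [mComp cpred [W]];
      mComp cmul [mComp csg [W]; mComp mSucc [mComp mSucc [mProj 0]]]]]]].

Fixpoint compile (c : mu_code) (n : nat) {struct c} : mu_code :=
  match c with
  | mZero => cconst 1
  | mSucc => match n with 0 => mZero | _ => mComp mSucc [mComp mSucc [mProj 1]] end
  | mProj i => if i <? n then mComp mSucc [mProj (S i)] else mZero
  | mComp f gs => let Ks := map (fun g => compile g n) gs in
      mComp cmul [mComp (compile f (length gs)) (mProj 0 :: map (fun K => mComp cpred [K]) Ks);
                  mComp csg [prodc Ks]]
  | mPrec f g => match n with 0 => mZero | S n' =>
      mComp (mPrec (compile f n') (mComp cmul [mComp csg [mProj 1];
         mComp (compile g (S (S n'))) (mProj 2 :: mProj 0 :: mComp cpred [mProj 1] :: map mProj (seq 3 n'))]))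
        (mProj 1 :: mProj 0 :: map mProj (seq 2 n')) end
  | mMin f => mComp cpred [mComp (mPrec mZero (STEP (compile f (S n)) n))
                 (mProj 0 :: mProj 0 :: map mProj (seq 1 n))]
  end.

Lemma compile_ok : forall c n s xs, length xs = n -> mu_eval (compile c n) (s :: xs) (ev s c xs).
Proof.
  induction c using mu_code_ind'; intros n s xs Hn; simpl.
  - exact (cconst_ok 1 _).
  - destruct n as [|n]; destruct xs as [|x xs]; simpl in Hn; try discriminate.
    + constructor.
    + apply E_succ, E_succ. apply (E_proj 1 (s :: x :: xs)); simpl; lia.
  - subst n. destruct (i <? length xs) eqn:E.
    + apply E_succ. apply Nat.ltb_lt in E. apply (E_proj (S i) (s :: xs)); simpl; lia.
    + constructor.
  - apply E_mul.
    + econstructor; [|apply IHc; rewrite !length_map; reflexivity].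
      constructor. apply (E_proj 0 (s :: xs)); simpl; lia.
      clear IHc. induction H; simpl; constructor; auto. apply E_pred. auto.
    + apply E_sg. clear IHc. induction H; simpl; [exact (cconst_ok 1 _)|]. apply E_mul; auto.
  - destruct n as [|n']; destruct xs as [|m xs]; simpl in Hn; try discriminate; [constructor|].
    injection Hn; intro Hn'.
    econstructor.
    + constructor. apply (E_proj 1 (s :: m :: xs)); simpl; lia.
      constructor. apply (E_proj 0 (s :: m :: xs)); simpl; lia.
      subst n'. apply (E_projs xs [s; m]).
    + clear Hn. induction m; simpl.
      * constructor. apply IHc1; auto.
      * eapply ev_precS; [apply IHm|].
        apply E_mul. apply E_sg. apply (E_proj 1 (m :: _ :: s :: xs)); simpl; lia.
        econstructor; [|apply IHc2; simpl; lia].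
        constructor. apply (E_proj 2 (m :: _ :: s :: xs)); simpl; lia.
        constructor. apply (E_proj 0 (m :: _ :: s :: xs)); simpl; lia.
        constructor. apply E_pred. apply (E_proj 1 (m :: _ :: s :: xs)); simpl; lia.
        subst n'. apply (E_projs xs [m; _; s]).
  - apply E_pred. econstructor.
    + constructor. apply (E_proj 0 (s :: xs)); simpl; lia.
      constructor. apply (E_proj 0 (s :: xs)); simpl; lia.
      subst n. apply (E_projs xs [s]).
    + cut (forall t, mu_eval (mPrec mZero (STEP (compile c (S n)) n)) (t :: s :: xs) (srch (ev s c) xs t)).
      { intro Ht. apply Ht. }
      intro t. induction t; simpl.
      * repeat constructor.
      * eapply ev_precS; [apply IHt|].
        assert (HW : mu_eval (mComp (compile c (S n)) (mProj 2 :: mProj 0 :: map mProj (seq 3 n)))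
                   (t :: srch (ev s c) xs t :: s :: xs) (ev s c (t :: xs))).
        { econstructor; [|apply IHc; simpl; lia].
          constructor. apply (E_proj 2 (t :: _ :: s :: xs)); simpl; lia.
          constructor. apply (E_proj 0 (t :: _ :: s :: xs)); simpl; lia.
          subst n. apply (E_projs xs [t; _; s]). }
        unfold STEP, hh.
        apply E_add. apply (E_proj 1 (t :: _ :: s :: xs)); simpl; lia.
        apply E_mul. apply E_iz. apply (E_proj 1 (t :: _ :: s :: xs)); simpl; lia.
        apply E_add. apply E_iz; exact HW.
        apply E_mul. apply E_iz, E_pred; exact HW.
        apply E_mul. apply E_sg; exact HW.
        apply E_succ, E_succ. apply (E_proj 0 (t :: _ :: s :: xs)); simpl; lia.
Qed.

Fixpoint Mf (c : mu_code) (s x : nat) : nat :=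
  match s with 0 => 0 | S t => Mf c t x + sg (ev t c [x]) end.
Definition Ef c s x := sg (Mf c s x).
Fixpoint sumf (f : nat -> nat) (N : nat) : nat :=
  match N with 0 => 0 | S M => sumf f M + f M end.
Definition cnt c s N := sumf (Ef c s) N.
Definition Gf c a b C s x := sumf (fun N => sg (a * N - (b * cnt c s N + C))) (S (S (x + x))).

Definition KM c := mPrec mZero (mComp cadd [mProj 1; mComp csg [mComp (compile c 1) [mProj 0; mProj 2]]]).
Definition KEf c := mComp csg [KM c].
Definition Kcnt c := mPrec mZero (mComp cadd [mProj 1; mComp (KEf c) [mProj 2; mProj 0]]).
Definition Gp c a b C := mPrec mZero (mComp cadd [mProj 1; mComp csg [mComp csub
   [mComp cadd [mComp cmul [cconst b; mComp (Kcnt c) [mProj 0; mProj 2]]; cconst C];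
    mComp cmul [cconst a; mProj 0]]]]).
Definition Gcode c a b C := mComp (Gp c a b C)
   [mComp mSucc [mComp mSucc [mComp cadd [mProj 1; mProj 1]]]; mProj 0].
Definition Bcode c a b C := mComp (KEf c) [mMin (Gcode c a b C); mProj 0].

Lemma KM_ok : forall c s x tl, mu_eval (KM c) (s :: x :: tl) (Mf c s x).
Proof.
  intros c s x tl; induction s; simpl; [repeat constructor|].
  eapply ev_precS; [apply IHs|].
  apply E_add. apply (E_proj 1 (s :: _ :: x :: tl)); simpl; lia.
  apply E_sg. econstructor; [|apply (compile_ok c 1 s [x]); reflexivity].
  constructor. apply (E_proj 0 (s :: _ :: x :: tl)); simpl; lia.
  constructor. apply (E_proj 2 (s :: _ :: x :: tl)); simpl; lia. constructor.
Qed.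

Lemma KEf_ok : forall c s x tl, mu_eval (KEf c) (s :: x :: tl) (Ef c s x).
Proof. intros. apply E_sg, KM_ok. Qed.

Lemma Kcnt_ok : forall c N s tl, mu_eval (Kcnt c) (N :: s :: tl) (cnt c s N).
Proof.
  intros c N s tl; induction N; unfold cnt; simpl; [repeat constructor|].
  eapply ev_precS; [apply IHN|].
  apply E_add. apply (E_proj 1 (N :: _ :: s :: tl)); simpl; lia.
  econstructor; [|apply (KEf_ok c s N [])].
  constructor. apply (E_proj 2 (N :: _ :: s :: tl)); simpl; lia.
  constructor. apply (E_proj 0 (N :: _ :: s :: tl)); simpl; lia. constructor.
Qed.

Lemma Gp_ok : forall c a b C M s tl, mu_eval (Gp c a b C) (M :: s :: tl)
   (sumf (fun N => sg (a * N - (b * cnt c s N + C))) M).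
Proof.
  intros c a b C M s tl; induction M; simpl; [repeat constructor|].
  eapply ev_precS; [apply IHM|].
  apply E_add. apply (E_proj 1 (M :: _ :: s :: tl)); simpl; lia.
  apply E_sg. apply E_sub.
  - apply E_add; [|apply cconst_ok]. apply E_mul; [apply cconst_ok|].
    econstructor; [|apply (Kcnt_ok c M s [])].
    constructor. apply (E_proj 0 (M :: _ :: s :: tl)); simpl; lia.
    constructor. apply (E_proj 2 (M :: _ :: s :: tl)); simpl; lia. constructor.
  - apply E_mul; [apply cconst_ok|]. apply (E_proj 0 (M :: _ :: s :: tl)); simpl; lia.
Qed.

Lemma Gcode_ok : forall c a b C s x tl, mu_eval (Gcode c a b C) (s :: x :: tl) (Gf c a b C s x).
Proof.
  intros. econstructor; [|apply (Gp_ok c a b C _ s [])].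
  constructor. apply E_succ, E_succ, E_add; apply (E_proj 1 (s :: x :: tl)); simpl; lia.
  constructor. apply (E_proj 0 (s :: x :: tl)); simpl; lia. constructor.
Qed.

Lemma Bcode_ok : forall c a b C x u, Gf c a b C u x = 0 ->
  (forall m, m < u -> Gf c a b C m x <> 0) ->
  mu_eval (Bcode c a b C) [x] (Ef c u x).
Proof.
  intros c a b C x u H0 H1. econstructor; [|apply (KEf_ok c u x [])].
  constructor.
  - constructor. rewrite <- H0. apply Gcode_ok.
    intros m Hm. specialize (H1 m Hm). destruct (Gf c a b C m x) as [|k] eqn:E; [congruence|].
    exists k. rewrite <- E. apply Gcode_ok.
  - constructor. apply (E_proj 0 [x]); simpl; lia. constructor.
Qed.

Lemma sg_01 : forall x, sg x = 0 \/ sg x = 1.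
Proof. intros [|x]; simpl; auto. Qed.

Lemma sumf_le : forall f g N, (forall y, y < N -> f y <= g y) -> sumf f N <= sumf g N.
Proof. intros f g N; induction N; simpl; intros H; auto.
  assert (sumf f N <= sumf g N) by (apply IHN; intros; apply H; lia). specialize (H N ltac:(lia)). lia. Qed.

Lemma sumf_add : forall f g N, sumf (fun y => f y + g y) N = sumf f N + sumf g N.
Proof. intros f g N; induction N; simpl; auto. rewrite IHN. lia. Qed.

Lemma sumf_cut : forall f h N, h <= N -> sumf (fun y => if y <? h then f y else 0) N = sumf f h.
Proof. intros f h N; induction N; intros Hh; simpl.
  - assert (h = 0) by lia; subst; reflexivity.
  - assert (h = S N \/ h <= N) as [E|E] by lia.
    + subst. simpl.
      assert (Hx : sumf (fun y => if y <? S N then f y else 0) N = sumf f N).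
      { clear. assert (forall M, M <= N -> sumf (fun y => if y <? S N then f y else 0) M = sumf f M).
        { induction M; simpl; intros; auto. rewrite IHM by lia.
          replace (M <? S N) with true; [auto|symmetry; apply Nat.ltb_lt; lia]. }
        apply H; lia. }
      replace (N <? S N) with true by (symmetry; apply Nat.ltb_lt; lia). lia.
    + rewrite IHN by auto. replace (N <? h) with false by (symmetry; apply Nat.ltb_ge; lia). lia.
Qed.

Lemma sumf_zero : forall f M, sumf f M = 0 -> forall N, N < M -> f N = 0.
Proof. intros f M; induction M; simpl; intros H N HN; [lia|].
  assert (N < M \/ N = M) as [|] by lia; [apply IHM; lia| subst; lia]. Qed.

Lemma sumf_zero' : forall f M, (forall N, N < M -> f N = 0) -> sumf f M = 0.
Proof. intros f M; induction M; simpl; intros H; auto. rewrite IHM by (intros; apply H; lia).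
  rewrite H by lia. reflexivity. Qed.

Lemma count_sumf : forall S N, count_below S N = sumf (char01 S) N.
Proof. intros S N; induction N; simpl; auto. Qed.

Lemma Mf_mono : forall c s s' x, s <= s' -> Mf c s x <= Mf c s' x.
Proof. intros c s s' x H; induction H; simpl; lia. Qed.

Lemma Ef_mono : forall c s s' x, s <= s' -> Ef c s x <= Ef c s' x.
Proof. intros. unfold Ef. pose proof (Mf_mono c s s' x H).
  destruct (Mf c s x); destruct (Mf c s' x); simpl; lia. Qed.

Lemma Ef_01 : forall c s x, Ef c s x <= 1.
Proof. intros; unfold Ef; destruct (sg_01 (Mf c s x)); lia. Qed.

Lemma Mf_pos : forall c s x, Mf c s x <> 0 -> exists t y, ev t c [x] = S y.
Proof. intros c s x; induction s; simpl; intros H; [lia|].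
  destruct (ev s c [x]) eqn:E; simpl in H. apply IHs; lia. eauto. Qed.

Lemma Ef_sound : forall c (A : nat -> bool), (forall n, A n = true <-> exists y, mu_eval c [n] y) ->
  forall s x, Ef c s x <= char01 A x.
Proof.
  intros c A HA s x. unfold Ef, char01.
  destruct (Mf c s x) eqn:E; simpl; [lia|].
  destruct (Mf_pos c s x) as [t [y Hy]]; [lia|].
  assert (A x = true) as -> by (apply HA; exists y; eapply ev_sound; eauto). lia.
Qed.

Lemma Ef_complete : forall c (A : nat -> bool), (forall n, A n = true <-> exists y, mu_eval c [n] y) ->
  forall x, A x = true -> exists s0, forall s, s0 <= s -> Ef c s x = 1.
Proof.
  intros c A HA x Hx. apply HA in Hx. destruct Hx as [y Hy].
  destruct (ev_complete _ _ _ Hy) as [s0 Hs0].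
  exists (S s0). intros s Hs. pose proof (Mf_mono c (S s0) s x Hs).
  simpl in H. rewrite Hs0 in H by lia. simpl in H. unfold Ef.
  destruct (Mf c s x); simpl; lia.
Qed.

Lemma cnt_complete : forall c (A : nat -> bool), (forall n, A n = true <-> exists y, mu_eval c [n] y) ->
  forall N, exists s0, forall s, s0 <= s -> count_below A N <= cnt c s N.
Proof.
  intros c A HA N. rewrite count_sumf. unfold cnt.
  destruct (bound_all (fun y s => char01 A y <= Ef c s y) N) as [S0 HS0].
  - intros m Hm. unfold char01. destruct (A m) eqn:E.
    + destruct (Ef_complete c A HA m E) as [s0 H]. exists s0; intros. rewrite H; auto.
    + exists 0; intros; lia.
  - exists S0. intros s Hs. apply sumf_le. intros; apply HS0; auto.
Qed.

Definition lsearch (f : nat -> nat) : nat -> nat -> nat :=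
  fix L i fuel := match fuel with 0 => i | S fl => if f i =? 0 then i else L (S i) fl end.

Lemma lsearch_ok : forall f fuel i, (forall m, m < i -> f m <> 0) -> f (i + fuel) = 0 ->
  let u := lsearch f i fuel in f u = 0 /\ forall m, m < u -> f m <> 0.
Proof.
  intros f fuel; induction fuel; intros i Hi Hz; simpl.
  - rewrite Nat.add_0_r in Hz. auto.
  - destruct (f i =? 0) eqn:E.
    + apply Nat.eqb_eq in E. auto.
    + apply IHfuel. intros m Hm. assert (m < i \/ m = i) as [|] by lia; [auto|subst].
      apply Nat.eqb_neq in E; auto. rewrite <- Hz. f_equal. lia.
Qed.

Lemma least_exists : forall (f : nat -> nat), (exists s, f s = 0) ->
  { u : nat | f u = 0 /\ forall m, m < u -> f m <> 0 }.
Proof.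
  intros f H.
  destruct (constructive_indefinite_ground_description_nat (fun s => f s = 0)
    (fun n => Nat.eq_dec (f n) 0) H) as [w Hw].
  exists (lsearch f 0 w). apply lsearch_ok; auto. intros; lia.
Qed.

Lemma argmin_range : forall (f : nat -> nat) h k, 0 < k ->
  exists x, h <= x < h + k /\ forall y, h <= y < h + k -> f x <= f y.
Proof.
  intros f h k; induction k; intros Hk; [lia|].
  destruct k as [|k].
  - exists h. split; [lia|]. intros y Hy. assert (y = h) by lia; subst; lia.
  - destruct IHk as [x [Hx1 Hx2]]; [lia|].
    destruct (Nat.le_gt_cases (f x) (f (h + S k))).
    + exists x. split; [lia|]. intros y Hy. assert (y < h + S k \/ y = h + S k) as [|] by lia.
      apply Hx2; lia. subst; lia.
    + exists (h + S k). split; [lia|]. intros y Hy. assert (y < h + S k \/ y = h + S k) as [|] by lia.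
      specialize (Hx2 y ltac:(lia)); lia. subst; lia.
Qed.

Lemma key_ineq : forall c (A B D : nat -> bool) a b C (u : nat -> nat),
  (forall n, A n = true <-> exists y, mu_eval c [n] y) ->
  (forall x, Gf c a b C (u x) x = 0) ->
  (forall y, char01 B y = Ef c (u y) y) ->
  (forall y, char01 D y + char01 B y = char01 A y) ->
  forall N, 1 <= N ->
  b * count_below D N + a * N <= b * count_below A N + C + b * count_below D (N / 2).
Proof.
  intros c A B D a b C u HA HG HB HD N HN.
  pose proof (Nat.div_mod N 2 ltac:(lia)) as Hdm. pose proof (Nat.mod_upper_bound N 2 ltac:(lia)) as Hmu.
  set (h := N / 2) in *.
  assert (Hh : h <= N) by lia.
  assert (Hh2 : N < 2 * h + 2) by lia.
  destruct (argmin_range u h (N - h)) as [xs [Hx1 Hx2]]; [lia|].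
  assert (Hc : a * N <= b * cnt c (u xs) N + C).
  { pose proof (sumf_zero _ _ (HG xs) N ltac:(lia)). simpl in H.
    destruct (a * N - (b * cnt c (u xs) N + C)) eqn:E; simpl in H; lia. }
  assert (Hs : cnt c (u xs) N + count_below D N <= count_below A N + count_below D h).
  { unfold cnt. rewrite !count_sumf. rewrite <- (sumf_cut (char01 D) h N Hh).
    rewrite <- !sumf_add. apply sumf_le. intros y Hy.
    destruct (y <? h) eqn:E.
    - pose proof (Ef_sound c A HA (u xs) y). lia.
    - apply Nat.ltb_ge in E. pose proof (Ef_mono c (u xs) (u y) y (Hx2 y ltac:(lia))).
      rewrite <- HB in H. specialize (HD y). lia. }
  fold h.
  assert (b * (cnt c (u xs) N + count_below D N) <= b * (count_below A N + count_below D h))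
    by (apply Nat.mul_le_mono_l; exact Hs).
  rewrite !Nat.mul_add_distr_l in H. lia.
Qed.
Open Scope R_scope.

Lemma nat_gt : forall x : R, exists n : nat, x < INR n.
Proof.
  intros x. destruct (archimed x) as [H1 H2].
  destruct (Z_le_gt_dec 0 (up x)).
  - exists (Z.to_nat (up x)). rewrite INR_IZR_INZ, Z2Nat.id by auto. lra.
  - exists 0%nat. simpl. apply Z.gt_lt in g. apply IZR_lt in g. lra.
Qed.

Lemma lim_upper : forall (u : nat -> R) l e, is_lim_seq u (Finite l) -> 0 < e ->
  exists N, forall k, (N <= k)%nat -> u k < l + e.
Proof.
  intros u l e H He. apply is_lim_seq_spec in H. destruct (H (mkposreal e He)) as [N HN].
  exists N. intros k Hk. specialize (HN k Hk). simpl in HN. apply Rabs_lt_between in HN. lra.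
Qed.

Lemma lim_lower : forall (u : nat -> R) l e, is_lim_seq u (Finite l) -> 0 < e ->
  exists N, forall k, (N <= k)%nat -> l - e < u k.
Proof.
  intros u l e H He. apply is_lim_seq_spec in H. destruct (H (mkposreal e He)) as [N HN].
  exists N. intros k Hk. specialize (HN k Hk). simpl in HN. apply Rabs_lt_between in HN. lra.
Qed.

Lemma INR_div2 : forall N, 2 * INR (N / 2)%nat <= INR N.
Proof.
  intros N. pose proof (Nat.div_mod N 2 ltac:(lia)).
  assert (2 * (N / 2) <= N)%nat by lia. apply le_INR in H0. rewrite mult_INR in H0. replace (INR 2) with 2 in H0 by (simpl; ring). lra.
Qed.

Lemma analytic (cA cD : nat -> nat) (l eps : R) (a b C : nat) :
  0 < eps -> is_lim_seq (fun k => INR (cA (S k)) / INR (S k)) (Finite l) ->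
  16 < INR b * eps -> INR b * l - 2 < INR a ->
  (forall N, (1 <= N)%nat -> (b * cD N + a * N <= b * cA N + C + b * cD (N / 2))%nat) ->
  (forall N, (cD N <= N)%nat) ->
  exists N0, forall k, (N0 <= k)%nat -> INR (cD (S k)) / INR (S k) <= 3 * eps / 4.
Proof.
  intros Heps Hlim Hb Ha HK HD.
  assert (Hbpos : 0 < INR b).
  { destruct b; simpl in Hb; [lra|]. apply lt_0_INR; lia. }
  destruct (lim_upper _ _ (eps / 16) Hlim ltac:(lra)) as [N1 HN1].
  assert (HA : forall N, (S N1 <= N)%nat -> INR (cA N) <= (l + eps / 16) * INR N).
  { intros N HN. destruct N as [|N]; [lia|]. specialize (HN1 N ltac:(lia)).
    assert (0 < INR (S N)) by (apply lt_0_INR; lia).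
    apply (Rmult_lt_compat_r (INR (S N))) in HN1; auto.
    unfold Rdiv in HN1. rewrite Rmult_assoc, Rinv_l, Rmult_1_r in HN1 by lra. lra. }
  set (Cb := INR C / INR b).
  assert (Hstep : forall N, (S N1 <= N)%nat ->
     INR (cD N) <= 3 * eps / 16 * INR N + Cb + INR (cD (N / 2)%nat)).
  { intros N HN. specialize (HK N ltac:(lia)). apply le_INR in HK.
    rewrite !plus_INR, !mult_INR in HK.
    specialize (HA N HN).
    assert (HNp : 0 <= INR N) by apply pos_INR.
    assert (H1 : INR b * INR (cA N) <= INR b * ((l + eps / 16) * INR N))
      by (apply Rmult_le_compat_l; lra).
    assert (H2 : (INR b * l - 2) * INR N <= INR a * INR N)
      by (apply Rmult_le_compat_r; lra).
    assert (H3 : 2 * INR N <= INR b * eps / 8 * INR N)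
      by (apply Rmult_le_compat_r; lra).
    apply (Rmult_le_reg_l (INR b)); auto.
    assert (E : INR b * Cb = INR C) by (unfold Cb; field; lra).
    assert (E2 : INR b * (3 * eps / 16 * INR N + Cb + INR (cD (N / 2)%nat)) =
       3 / 16 * (INR b * eps * INR N) + INR C + INR b * INR (cD (N / 2)%nat)) by (unfold Cb; field; lra).
    rewrite E2. nra. }
  destruct (nat_gt (16 * Cb / eps + INR (S N1) + 1)) as [N3 HN3].
  assert (HCb : 0 <= Cb) by (unfold Cb; apply Rdiv_le_0_compat; [apply pos_INR|lra]).
  assert (Hclaim : forall N, INR (cD N) <= eps / 2 * INR N + INR N3).
  { intros N. induction N as [N IH] using lt_wf_ind.
    destruct (le_lt_dec N3 N) as [HN|HN].
    - assert (HN1' : (S N1 <= N)%nat).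
      { apply INR_le. apply le_INR in HN. pose proof (pos_INR N1).
        assert (0 <= 16 * Cb / eps) by (apply Rdiv_le_0_compat; lra). lra. }
      assert (HNpos : (1 <= N)%nat) by lia.
      specialize (Hstep N HN1').
      assert (Hlt : (N / 2 < N)%nat) by (apply Nat.div_lt; lia).
      specialize (IH _ Hlt).
      pose proof (INR_div2 N).
      assert (Hm : eps / 2 * INR (N / 2)%nat <= eps / 4 * INR N) by nra.
      assert (Hc : Cb <= eps / 16 * INR N).
      { apply le_INR in HN.
        assert (16 * Cb / eps <= INR N) by (pose proof (pos_INR (S N1)); lra).
        assert (16 * Cb <= eps * INR N).
        { replace (16 * Cb) with (eps * (16 * Cb / eps)) by (field; lra). apply Rmult_le_compat_l; lra. }
        lra. }
      lra.
    - apply lt_INR in HN. pose proof (HD N) as HdN. apply le_INR in HdN.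
      assert (0 <= eps / 2 * INR N) by (pose proof (pos_INR N); nra). lra. }
  destruct (nat_gt (4 * INR N3 / eps)) as [N0 HN0].
  exists N0. intros k Hk.
  assert (Hn : 0 < INR (S k)) by (apply lt_0_INR; lia).
  assert (HK3 : INR N3 <= eps / 4 * INR (S k)).
  { apply le_INR in Hk. rewrite S_INR.
    assert (4 * INR N3 <= eps * (INR k + 1)).
    { replace (4 * INR N3) with (eps * (4 * INR N3 / eps)) by (field; lra).
      apply Rmult_le_compat_l; lra. }
    lra. }
  specialize (Hclaim (S k)).
  unfold Rdiv at 1. apply (Rmult_le_reg_r (INR (S k))); auto.
  rewrite Rmult_assoc, Rinv_l, Rmult_1_r by lra. lra.
Qed.

Lemma choose_a (cA : nat -> nat) l b : 0 < INR b ->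
  is_lim_seq (fun k => INR (cA (S k)) / INR (S k)) (Finite l) ->
  exists a C, INR b * l - 2 < INR a /\ forall N, (a * N <= b * cA N + C)%nat.
Proof.
  intros Hb Hl. destruct (archimed (INR b * l)) as [H1 H2].
  destruct (Z_le_gt_dec 0 (up (INR b * l) - 2)) as [Hz|Hz].
  - set (z := (up (INR b * l) - 2)%Z) in *.
    assert (Ea : INR (Z.to_nat z) = IZR z) by (rewrite INR_IZR_INZ, Z2Nat.id; auto).
    assert (Hzr : IZR z = IZR (up (INR b * l)) - 2) by (unfold z; rewrite minus_IZR; reflexivity).
    destruct (lim_lower _ _ (/ INR b) Hl ltac:(apply Rinv_0_lt_compat; lra)) as [N1 HN1].
    exists (Z.to_nat z), (Z.to_nat z * S N1)%nat. split; [lra|].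
    intros N. destruct (le_lt_dec N (S N1)) as [HN|HN].
    + pose proof (Nat.mul_le_mono_l _ _ (Z.to_nat z) HN). eapply Nat.le_trans; [exact H| apply Nat.le_add_l].
    + destruct N as [|N]; [lia|]. specialize (HN1 N ltac:(lia)).
      assert (Hn : 0 < INR (S N)) by (apply lt_0_INR; lia).
      apply (Rmult_lt_compat_r (INR (S N))) in HN1; auto.
      unfold Rdiv in HN1. rewrite Rmult_assoc, Rinv_l, Rmult_1_r in HN1 by lra.
      apply (Rmult_lt_compat_l (INR b)) in HN1; auto.
      assert (E : INR b * ((l - / INR b) * INR (S N)) = (INR b * l - 1) * INR (S N)) by (field; lra).
      rewrite E in HN1.
      assert (IZR z * INR (S N) <= (INR b * l - 1) * INR (S N)) by (apply Rmult_le_compat_r; lra).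
      assert (INR (Z.to_nat z * S N) <= INR (b * cA (S N))).
      { rewrite !mult_INR, Ea. lra. }
      apply INR_le in H0. eapply Nat.le_trans; [exact H0| apply Nat.le_add_r].
  - exists 0%nat, 0%nat. split.
    + simpl. assert (IZR (up (INR b * l) - 2) <= -1) by (apply IZR_le; lia).
      rewrite minus_IZR in H. lra.
    + intros; simpl; lia.
Qed.

Lemma limsup_bound (u : nat -> R) (r : R) :
  (exists N0, forall k, (N0 <= k)%nat -> u k <= r) -> Rbar_le (LimSup_seq u) (Finite r).
Proof.
  intros H. rewrite <- (LimSup_seq_const r). apply LimSup_le. exact H.
Qed.

Lemma count_le : forall S N, (count_below S N <= N)%nat.
Proof. intros S N; induction N; simpl; auto. unfold char01; destruct (S N); lia. Qed.

Theorem mainTheorem8 (A : nat -> bool) (eps : R) :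
  ce_set A -> has_density A -> (0 < eps)%R ->
  exists B : nat -> bool,
    computable_set B /\ subset_of B A /\ Rbar_lt (Dist A B) (Finite eps).
Proof.
  intros [c HA] [l Hl] Heps.
  destruct (nat_gt (16 / eps)) as [b Hb].
  assert (Hb' : 16 < INR b * eps).
  { apply (Rmult_lt_compat_r eps) in Hb; auto. unfold Rdiv in Hb.
    rewrite Rmult_assoc, Rinv_l, Rmult_1_r in Hb by lra. lra. }
  assert (Hbpos : 0 < INR b) by (destruct b; simpl in Hb'; [lra|apply lt_0_INR; lia]).
  destruct (choose_a (count_below A) l b Hbpos Hl) as [a [C [Ha Hcond]]].
  assert (hex : forall x, exists s, Gf c a b C s x = 0%nat).
  { intros x.
    destruct (bound_all (fun N s => count_below A N <= cnt c s N)%nat (S (S (x + x)))) as [S0 HS0].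
    - intros m Hm. apply cnt_complete; auto.
    - exists S0. apply sumf_zero'. intros N HN. specialize (HS0 N HN S0 (Nat.le_refl _)).
      specialize (Hcond N).
      assert (b * count_below A N <= b * cnt c S0 N)%nat by (apply Nat.mul_le_mono_l; auto).
      replace (a * N - (b * cnt c S0 N + C))%nat with 0%nat by lia. reflexivity. }
  set (u := fun x => proj1_sig (least_exists _ (hex x))).
  assert (Hu : forall x, Gf c a b C (u x) x = 0%nat /\ forall m, (m < u x)%nat -> Gf c a b C m x <> 0%nat).
  { intros x. unfold u. destruct (least_exists _ (hex x)); simpl; auto. }
  set (B := fun x => Nat.eqb (Ef c (u x) x) 1).
  assert (HB : forall y, char01 B y = Ef c (u y) y).
  { intros y. unfold char01, B. pose proof (Ef_01 c (u y) y).
    destruct (Ef c (u y) y) as [|[|k]]; simpl; lia. }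
  assert (Hsub : subset_of B A).
  { intros n Hn. pose proof (Ef_sound c A HA (u n) n). rewrite <- HB in H.
    unfold char01 in H. rewrite Hn in H. destruct (A n); auto; lia. }
  exists B. split; [|split; auto].
  - exists (Bcode c a b C). intros n. rewrite HB. apply Bcode_ok; apply Hu.
  - assert (HD : forall y, (char01 (symdiff A B) y + char01 B y = char01 A y)%nat).
    { intros y. unfold char01, symdiff. specialize (Hsub y).
      destruct (A y), (B y); simpl; auto. specialize (Hsub eq_refl); discriminate. }
    assert (HK := key_ineq c A B (symdiff A B) a b C u HA (fun x => proj1 (Hu x)) HB HD).
    destruct (analytic (count_below A) (count_below (symdiff A B)) l eps a b C Heps Hl Hb' Ha HK
               (count_le _)) as [N0 HN0].
    unfold Dist, upper_density.
    eapply Rbar_le_lt_trans.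
    + apply limsup_bound. exists N0. intros k Hk. unfold rho_seq, rho_n. apply HN0; auto.
    + simpl. lra.
Qed.
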